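(* Assume $M$ is nonempty. Then $M$ is connected if and only if for each $k\in\{1,\dots,d\}$ there is a point $(a,b)\in K$ with $a_k=|b_k|$.
   Context: Let $\mathbb C^{d,d}=\mathbb C^d\times\mathbb C^d$ with coordinates $(z,w)$; $\mathbb T^d$ acts by $(z_k,w_k)\mapsto(e^{i\theta_k}z_k,e^{i\theta_k}w_k)$. Fix $u_1,\dots,u_d\in\mathbb Z^n$ spanning $\mathbb R^n$; let $\beta\colon\mathbb R^d\to\mathbb R^n$, $e_k\mapsto u_k$, $\mathfrak n=\ker\beta$ with inclusion $\iota$, and $N\subset\mathbb T^d$ the kernel of the induced homomorphism $\mathbb T^d\to\mathbb T^n$. Identify $\mathbb R^d$ with its dual via the standard inner product. Fix real constants $\lambda^{(j)}_k$, put $\lambda^{(c)}_k=\lambda^{(2)}_k+i\lambda^{(3)}_k$, and let $\mu=(\mu_I,\mu_S,\mu_T)$ with $\mu_I(z,w)=\sum_k(\tfrac12(|z_k|^2+|w_k|^2)+\lambda^{(1)}_k)\iota^*e_k$, $(\mu_S+i\mu_T)(z,w)=\sum_k(iz_k\bar w_k+\lambda^{(c)}_k)\iota^*e_k$; $M=\mu^{-1}(0)/N$. For $(a,b)\in\mathbb R^n\times\mathbb C^n$, $a_k=\langle a,u_k\rangle-\lambda^{(1)}_k$, $b_k=\langle b,u_k\rangle-\lambda^{(c)}_k$, and $K=\{(a,b): a_k\geqslant|b_k|\ \forall k\}$ (this is the image of the moment map $\phi$ of the $\mathbb T^d/N$-action on $M$). *)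

(* Defs.v *)
From HB Require Import structures.
From mathcomp Require Import all_boot all_order all_algebra generic_quotient.
From mathcomp Require Import all_classical all_reals.
From mathcomp Require Import all_analysis.
Import numFieldNormedType.Exports.
Set Implicit Arguments. Unset Strict Implicit. Unset Printing Implicit Defensive.
Import Order.TTheory GRing.Theory Num.Theory.
Local Open Scope classical_set_scope.
Local Open Scope ring_scope.

(* A point (z,w) of C^{d,d} = C^d x C^d is encoded by a real 4 x d matrix p:
   z_k = p 0 k + i p 1 k,   w_k = p 2 k + i p 3 k.
   The vectors u_1..u_d in Z^n are the rows of u : 'M[int]_(d,n).
   lam1 k = lambda^(1)_k, lam2 k = lambda^(2)_k, lam3 k = lambda^(3)_k. *)

Section ToricHK.
Variables (R : realType) (d n : nat) (u : 'M[int]_(d, n))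
  (lam1 lam2 lam3 : 'I_d -> R).

Local Notation pt := (matrix R 4 d).
Definition zre (p : pt) k := p (inord 0) k.
Definition zim (p : pt) k := p (inord 1) k.
Definition wre (p : pt) k := p (inord 2) k.
Definition wim (p : pt) k := p (inord 3) k.

Definition uR (k : 'I_d) (j : 'I_n) : R := (u k j)%:~R.

(* n = ker beta, beta(e_k) = u_k *)
Definition in_frak_n (v : 'I_d -> R) : Prop :=
  forall j : 'I_n, \sum_(k < d) v k * uR k j = 0.

(* The components of mu are sum_k c_k iota^* e_k; such a functional on n
   vanishes iff sum_k c_k v_k = 0 for every v in n. *)
Definition coeff_I (p : pt) k : R :=
  2^-1 * (zre p k ^+ 2 + zim p k ^+ 2 + wre p k ^+ 2 + wim p k ^+ 2) + lam1 k.
(* i z_k conj(w_k) = (Re z Im w - Im z Re w) + i (Re z Re w + Im z Im w) *)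
Definition coeff_S (p : pt) k : R :=
  zre p k * wim p k - zim p k * wre p k + lam2 k.
Definition coeff_T (p : pt) k : R :=
  zre p k * wre p k + zim p k * wim p k + lam3 k.

Definition functional_zero (c : 'I_d -> R) : Prop :=
  forall v, in_frak_n v -> \sum_(k < d) c k * v k = 0.

Definition mu_zero : set pt := [set p |
  functional_zero (coeff_I p) /\ functional_zero (coeff_S p) /\
  functional_zero (coeff_T p)].

(* T^d = R^d / 2piZ^d acting by (z_k,w_k) -> (e^{i th_k} z_k, e^{i th_k} w_k) *)
Definition act (th : 'I_d -> R) (p : pt) : pt :=
  \matrix_(r < 4, k < d)
    (if (r == inord 0 :> 'I_4) then cos (th k) * zre p k - sin (th k) * zim p k
     else if (r == inord 1 :> 'I_4) then sin (th k) * zre p k + cos (th k) * zim p k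
     else if (r == inord 2 :> 'I_4) then cos (th k) * wre p k - sin (th k) * wim p k
     else sin (th k) * wre p k + cos (th k) * wim p k).

(* N = kernel of T^d -> T^n induced by beta: th in N iff sum_k th_k u_k in 2piZ^n *)
Definition inN (th : 'I_d -> R) : Prop :=
  exists m : 'I_n -> int, forall j, \sum_(k < d) th k * uR k j = 2 * pi * (m j)%:~R.

Local Notation Z0 := (set_type mu_zero).

Definition orbit (p : Z0) : set Z0 :=
  [set q | exists th, inN th /\ val q = act th (val p)].

Definition orbit_rel : rel Z0 := fun p q => `[< orbit p = orbit q >].

Lemma orbit_rel_refl : reflexive orbit_rel.
Proof. by move=> p; apply/asboolP. Qed.
Lemma orbit_rel_sym : symmetric orbit_rel.
Proof.
move=> p q; apply/idP/idP => /asboolP h; apply/asboolP; exact: esym h.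
Qed.
Lemma orbit_rel_trans : transitive orbit_rel.
Proof.
move=> q p r /asboolP h1 /asboolP h2; apply/asboolP; exact: eq_trans h1 h2.
Qed.

Canonical orbit_equiv := EquivRel orbit_rel orbit_rel_refl orbit_rel_sym
  orbit_rel_trans.

Definition Mq : quotType Z0 := {eq_quot orbit_equiv}%qT.

(* The set K: a in R^n, b = b2 + i b3 in C^n *)
Definition a_k (a : 'I_n -> R) k := \sum_(j < n) a j * uR k j - lam1 k.
Definition b2_k (b2 : 'I_n -> R) k := \sum_(j < n) b2 j * uR k j - lam2 k.
Definition b3_k (b3 : 'I_n -> R) k := \sum_(j < n) b3 j * uR k j - lam3 k.
Definition abs_b_k b2 b3 k : R := Num.sqrt (b2_k b2 k ^+ 2 + b3_k b3 k ^+ 2).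
Definition inK a b2 b3 : Prop := forall k, abs_b_k b2 b3 k <= a_k a k.

End ToricHK.

Notation M u lam1 lam2 lam3 := (quotient_topology (Mq u lam1 lam2 lam3)).

(* Main.v *)
Require Import Defs.
From HB Require Import structures.
From mathcomp Require Import all_boot all_order all_algebra generic_quotient.
From mathcomp Require Import all_classical all_reals.
From mathcomp Require Import all_analysis.
Import numFieldNormedType.Exports.
Import Order.TTheory GRing.Theory Num.Theory.
Local Open Scope classical_set_scope.
Local Open Scope ring_scope.
From mathcomp Require Import ring lra.
Set Implicit Arguments. Unset Strict Implicit. Unset Printing Implicit Defensive.

Section Work.
Variables (R : realType) (d n : nat) (u : 'M[int]_(d, n)).

Definition good (c : 'I_d -> R) := exists a : 'I_n -> R, forall k, c k = \sum_(j < n) a j * uR R u k j.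

Lemma good_fz c : good c -> functional_zero u c.
Proof.
move=> [a ha] v hv.
under eq_bigr do rewrite ha mulr_suml.
rewrite exchange_big /= big1 // => j _.
rewrite (eq_bigr (fun k => a j * (v k * uR R u k j))); last first.
  by move=> k _; rewrite mulrAC -mulrA.
by rewrite -mulr_sumr hv mulr0.
Qed.

Lemma fz_good c : functional_zero u c -> good c.
Proof.
move=> hc.
pose U : 'M[R]_(d, n) := \matrix_(k, j) uR R u k j.
pose cr : 'rV[R]_d := \row_k c k.
have : (cr <= U^T)%MS.
  rewrite submxE; apply/eqP/matrixP => i k'; rewrite !mxE.
  have hv : in_frak_n u (fun k => cokermx U^T k k').
    move=> j; have := congr1 (fun M : 'M[R]_(n, d) => M j k') (mulmx_coker U^T).
    rewrite !mxE => E; rewrite -[RHS]E; apply: eq_bigr => k _; by rewrite !mxE mulrC.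
  rewrite -[RHS](hc _ hv); apply: eq_bigr => k _; by rewrite !mxE.
case/submxP => a ha; exists (fun j => a 0 j) => k.
have := congr1 (fun M : 'M[R]_(1, d) => M 0 k) ha; rewrite !mxE => ->.
by apply: eq_bigr => j _; rewrite !mxE.
Qed.

Variables (lam1 lam2 lam3 : 'I_d -> R).

Lemma i4_ne (a b : nat) : (a < 4)%N -> (b < 4)%N -> a != b ->
  (inord a == inord b :> 'I_4) = false.
Proof. by move=> ha hb nab; apply/eqP => /(congr1 val); rewrite /= !inordK //; apply/eqP. Qed.

Lemma i4_cases (r : 'I_4) : [\/ r = inord 0, r = inord 1, r = inord 2 | r = inord 3].
Proof.
case: r => [[|[|[|[|m]]]] Hr] //;
 [constructor 1|constructor 2|constructor 3|constructor 4];
 apply/val_inj; by rewrite /= inordK.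
Qed.

Definition mkpt (f0 f1 f2 f3 : 'I_d -> R) : 'M[R]_(4, d) :=
  \matrix_(r < 4, k < d) (if r == inord 0 :> 'I_4 then f0 k
     else if r == inord 1 :> 'I_4 then f1 k
     else if r == inord 2 :> 'I_4 then f2 k else f3 k).

Lemma mkptE f0 f1 f2 f3 k :
  [/\ zre (mkpt f0 f1 f2 f3) k = f0 k, zim (mkpt f0 f1 f2 f3) k = f1 k,
      wre (mkpt f0 f1 f2 f3) k = f2 k & wim (mkpt f0 f1 f2 f3) k = f3 k].
Proof.
by split; rewrite /zre /zim /wre /wim !mxE ?eqxx ?i4_ne // ?eqxx.
Qed.

Lemma actE (th : 'I_d -> R) (p : 'M[R]_(4, d)) k :
  [/\ zre (act th p) k = cos (th k) * zre p k - sin (th k) * zim p k,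
      zim (act th p) k = sin (th k) * zre p k + cos (th k) * zim p k,
      wre (act th p) k = cos (th k) * wre p k - sin (th k) * wim p k &
      wim (act th p) k = sin (th k) * wre p k + cos (th k) * wim p k].
Proof.
by split; rewrite /act /zre /zim /wre /wim !mxE ?eqxx ?i4_ne // ?eqxx.
Qed.

Lemma pt_eq (p q : 'M[R]_(4, d)) :
  (forall k, [/\ zre p k = zre q k, zim p k = zim q k, wre p k = wre q k & wim p k = wim q k]) -> p = q.
Proof.
move=> h; apply/matrixP => r k; have [e1 e2 e3 e4] := h k.
by case: (i4_cases r) => ->.
Qed.

Lemma act_coeff (th : 'I_d -> R) (p : 'M[R]_(4, d)) k :
  [/\ coeff_I lam1 (act th p) k = coeff_I lam1 p k,
      coeff_S lam2 (act th p) k = coeff_S lam2 p k &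
      coeff_T lam3 (act th p) k = coeff_T lam3 p k].
Proof.
rewrite /coeff_I /coeff_S /coeff_T; have [-> -> -> ->] := actE th p k.
have h := cos2Dsin2 (th k).
split.
- congr (_ * _ + _).
  set c := cos _ in h *; set s := sin _ in h *.
  rewrite -[RHS]mul1r -h; ring.
- congr (_ + _); set c := cos _ in h *; set s := sin _ in h *.
  rewrite -[RHS]mul1r -h; ring.
- congr (_ + _); set c := cos _ in h *; set s := sin _ in h *.
  rewrite -[RHS]mul1r -h; ring.
Qed.

Lemma mu_zeroP (p : 'M[R]_(4, d)) : mu_zero u lam1 lam2 lam3 p <->
  [/\ good (coeff_I lam1 p), good (coeff_S lam2 p) & good (coeff_T lam3 p)].
Proof.
split.
  by move=> [h1 [h2 h3]]; split; apply: fz_good.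
by move=> [h1 h2 h3]; split; [|split]; apply: good_fz.
Qed.

Lemma mu_zero_coeff (p q : 'M[R]_(4, d)) : mu_zero u lam1 lam2 lam3 p ->
  (forall k, [/\ coeff_I lam1 q k = coeff_I lam1 p k,
      coeff_S lam2 q k = coeff_S lam2 p k & coeff_T lam3 q k = coeff_T lam3 p k]) ->
  mu_zero u lam1 lam2 lam3 q.
Proof.
move=> /mu_zeroP [[a ha] [b hb] [c hc]] h; apply/mu_zeroP; split.
- by exists a => k; have [-> _ _] := h k.
- by exists b => k; have [_ -> _] := h k.
- by exists c => k; have [_ _ ->] := h k.
Qed.

Lemma act_mu (th : 'I_d -> R) (p : 'M[R]_(4, d)) : mu_zero u lam1 lam2 lam3 p -> mu_zero u lam1 lam2 lam3 (act th p).
Proof. by move=> hp; apply: (mu_zero_coeff hp) => k; apply: act_coeff. Qed.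

Lemma act0 (p : 'M[R]_(4, d)) : act (fun=> 0) p = p.
Proof.
apply: pt_eq => k; have [-> -> -> ->] := actE (fun=> 0) p k.
by split; rewrite cos0 sin0 !mul1r !mul0r ?subr0 ?add0r ?addr0.
Qed.


Lemma angle_ex (c s : R) : c ^+ 2 + s ^+ 2 = 1 -> exists th, cos th = c /\ sin th = s.
Proof.
move=> h.
have hc : -1 <= c <= 1.
  have : c ^+ 2 <= 1 by rewrite -h lerDl sqr_ge0.
  by move=> hc2; apply/andP; split; nra.
have hs : Num.sqrt (1 - c ^+ 2) = `|s|.
  by rewrite -sqrtr_sqr; congr Num.sqrt; rewrite -h addrAC subrr add0r.
have cK : cos (acos c) = c by apply: acosK; rewrite in_itv.
have [s0|s0] := leP 0 s.
  exists (acos c); split => //; by rewrite sin_acos // hs ger0_norm.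
exists (- acos c); rewrite cosN sinN sin_acos // hs ltr0_norm //; split=> //.
by rewrite opprK.
Qed.

Lemma sq0 (x y : R) : x ^+ 2 + y ^+ 2 = 0 -> x = 0 /\ y = 0.
Proof. by move=> h; split; nra. Qed.

Lemma hopf1 (x1 y1 x2 y2 x1' y1' x2' y2' : R) :
  x1 ^+ 2 + y1 ^+ 2 = x1' ^+ 2 + y1' ^+ 2 ->
  x2 ^+ 2 + y2 ^+ 2 = x2' ^+ 2 + y2' ^+ 2 ->
  x1 * y2 - y1 * x2 = x1' * y2' - y1' * x2' ->
  x1 * x2 + y1 * y2 = x1' * x2' + y1' * y2' ->
  exists c s, [/\ c ^+ 2 + s ^+ 2 = 1, x1' = c * x1 - s * y1, y1' = s * x1 + c * y1,
                  x2' = c * x2 - s * y2 & y2' = s * x2 + c * y2].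
Proof.
move=> hD hE hb2 hb3.
have [D0|D0] := eqVneq (x1 ^+ 2 + y1 ^+ 2) 0.
  have [-> ->] := sq0 D0; move: D0; rewrite hD => /sq0 [-> ->].
  have [E0|E0] := eqVneq (x2 ^+ 2 + y2 ^+ 2) 0.
    have [-> ->] := sq0 E0; move: E0; rewrite hE => /sq0 [-> ->].
    by exists 1, 0; split; ring.
  set E := x2 ^+ 2 + y2 ^+ 2 in E0 hE *.
  exists ((x2' * x2 + y2' * y2) / E), ((y2' * x2 - x2' * y2) / E).
  have key : (x2' * x2 + y2' * y2) ^+ 2 + (y2' * x2 - x2' * y2) ^+ 2 = E ^+ 2.
    by rewrite [E ^+ 2]expr2 {2}hE /E; ring.
  split.
  - by rewrite !expr_div_n -mulrDl key divff // expf_neq0.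
  - ring.
  - ring.
  - rewrite /E; field; exact: E0.
  - rewrite /E; field; exact: E0.
set D := x1 ^+ 2 + y1 ^+ 2 in D0 hD *.
pose P := x1' * x1 + y1' * y1; pose Q := y1' * x1 - x1' * y1.
have z3 : (x1 * x2 + y1 * y2) - (x1' * x2' + y1' * y2') = 0 by rewrite hb3 subrr.
have z2 : (x1 * y2 - y1 * x2) - (x1' * y2' - y1' * x2') = 0 by rewrite hb2 subrr.
have zD : (x1' ^+ 2 + y1' ^+ 2) - D = 0 by rewrite hD subrr.
have e2 : D * x2' = P * x2 - Q * y2.
  apply/eqP; rewrite eq_sym -subr_eq0; apply/eqP.
  have -> : P * x2 - Q * y2 - D * x2' =
     x1' * ((x1 * x2 + y1 * y2) - (x1' * x2' + y1' * y2'))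
     - y1' * ((x1 * y2 - y1 * x2) - (x1' * y2' - y1' * x2'))
     + ((x1' ^+ 2 + y1' ^+ 2) - D) * x2' by rewrite /P /Q /D; ring.
  by rewrite z2 z3 zD; ring.
have e3 : D * y2' = Q * x2 + P * y2.
  apply/eqP; rewrite eq_sym -subr_eq0; apply/eqP.
  have -> : Q * x2 + P * y2 - D * y2' =
     y1' * ((x1 * x2 + y1 * y2) - (x1' * x2' + y1' * y2'))
     + x1' * ((x1 * y2 - y1 * x2) - (x1' * y2' - y1' * x2'))
     + ((x1' ^+ 2 + y1' ^+ 2) - D) * y2' by rewrite /P /Q /D; ring.
  by rewrite z2 z3 zD; ring.
exists (P / D), (Q / D); split.
- have key : P ^+ 2 + Q ^+ 2 = D ^+ 2.
    by rewrite [D ^+ 2]expr2 {2}hD /P /Q /D; ring.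
  by rewrite !expr_div_n -mulrDl key divff // expf_neq0.
- rewrite /P /Q /D; field; exact: D0.
- rewrite /P /Q /D; field; exact: D0.
- apply: (@mulfI _ D) => //; rewrite e2; field; exact: D0.
- apply: (@mulfI _ D) => //; rewrite e3; field; exact: D0.
Qed.


Definition zz (p : 'M[R]_(4, d)) k := zre p k ^+ 2 + zim p k ^+ 2.
Definition ww (p : 'M[R]_(4, d)) k := wre p k ^+ 2 + wim p k ^+ 2.

Lemma coeffI_eq (p q : 'M[R]_(4, d)) k :
  coeff_I lam1 p k = coeff_I lam1 q k -> zz p k + ww p k = zz q k + ww q k.
Proof.
rewrite /coeff_I /zz /ww => /addIr /(congr1 (fun x => 2 * x)).
by rewrite !mulrA divff ?pnatr_eq0 // !mul1r !addrA.
Qed.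

Lemma hopf (p q : 'M[R]_(4, d)) :
  (forall k, [/\ coeff_I lam1 p k = coeff_I lam1 q k, coeff_S lam2 p k = coeff_S lam2 q k,
      coeff_T lam3 p k = coeff_T lam3 q k & zz p k = zz q k]) ->
  exists th, q = act th p.
Proof.
move=> h.
have h1 : forall k, exists t, [/\ zre q k = cos t * zre p k - sin t * zim p k,
      zim q k = sin t * zre p k + cos t * zim p k,
      wre q k = cos t * wre p k - sin t * wim p k &
      wim q k = sin t * wre p k + cos t * wim p k].
  move=> k; have [hI hS hT hz] := h k.
  have hw : ww p k = ww q k.
    by have := coeffI_eq hI; rewrite hz => /addrI.
  move: hS hT; rewrite /coeff_S /coeff_T => /addIr hS /addIr hT.
  have [c [s [cs e1 e2 e3 e4]]] := hopf1 hz hw hS hT.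
  have [t [ct st]] := angle_ex cs.
  by exists t; rewrite ct st.
have [th hth] := choice h1.
exists th; apply: pt_eq => k; have [-> -> -> ->] := actE th p k.
by have [-> -> -> ->] := hth k.
Qed.


Definition sdisc (A B2 B3 : R) : R := Num.sqrt (A ^+ 2 - (B2 ^+ 2 + B3 ^+ 2)).
Definition sq (A B2 B3 : R) : R := Num.sqrt (A + sdisc A B2 B3).
Definition sz0 (e : bool) (A B2 B3 : R) := if e then sq A B2 B3 else B3 / sq A B2 B3.
Definition sz1 (e : bool) (A B2 B3 : R) := if e then 0 else - (B2 / sq A B2 B3).
Definition sw0 (e : bool) (A B2 B3 : R) := if e then B3 / sq A B2 B3 else sq A B2 B3.
Definition sw1 (e : bool) (A B2 B3 : R) := if e then B2 / sq A B2 B3 else 0.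

Lemma sec1 e (A B2 B3 : R) : 0 <= A -> B2 ^+ 2 + B3 ^+ 2 <= A ^+ 2 ->
  let z0 := sz0 e A B2 B3 in let z1 := sz1 e A B2 B3 in
  let w0 := sw0 e A B2 B3 in let w1 := sw1 e A B2 B3 in
  [/\ z0 ^+ 2 + z1 ^+ 2 + w0 ^+ 2 + w1 ^+ 2 = 2 * A,
      z0 * w1 - z1 * w0 = B2, z0 * w0 + z1 * w1 = B3 &
      z0 ^+ 2 + z1 ^+ 2 = if e then A + sdisc A B2 B3 else A - sdisc A B2 B3].
Proof.
move=> A0 BA /=.
set s : R := sdisc A B2 B3.
have s0 : 0 <= s by apply: sqrtr_ge0.
have ss : s ^+ 2 = A ^+ 2 - (B2 ^+ 2 + B3 ^+ 2) by rewrite sqr_sqrtr // subr_ge0.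
rewrite /sz0 /sz1 /sw0 /sw1 /sq -/s.
set W : R := Num.sqrt (A + s).
have [q0|q0] := eqVneq (A + s) 0.
  have A0' : A = 0 by lra.
  have s0' : s = 0 by lra.
  have hB : B2 ^+ 2 + B3 ^+ 2 = 0 by move: BA; rewrite A0' expr0n /=; nra.
  have [-> ->] := sq0 hB.
  have W0 : W = 0 by rewrite /W q0 sqrtr0.
  rewrite W0 A0' s0'; case: e; rewrite ?mul0r ?invr0 ?mulr0 ?oppr0 ?expr0n /= ?addr0 ?subr0 ?mul0r ?mulr0 //.
have qp : 0 < A + s by rewrite lt_def q0 /=; lra.
have W2 : W ^+ 2 = A + s by rewrite sqr_sqrtr // ltW.
have Wn0 : W != 0 by rewrite sqrtr_eq0 -ltNge.
have hB3 : B3 ^+ 2 = A ^+ 2 - s ^+ 2 - B2 ^+ 2 by rewrite ss; ring.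
case: e.
- split.
  + rewrite expr0n /= addr0 !expr_div_n W2.
    rewrite hB3; field => //.
  + by field.
  + by rewrite mul0r addr0; field.
  + by rewrite expr0n /= addr0 W2.
- split.
  + rewrite expr0n /= addr0 sqrrN !expr_div_n W2.
    rewrite hB3; field => //.
  + by rewrite mulr0 sub0r mulNr opprK; field.
  + by rewrite mulr0 addr0; field.
  + rewrite sqrrN !expr_div_n W2.
    rewrite hB3; field => //.
Qed.


Lemma sqrt_le (x y : R) : 0 <= y -> x <= y ^+ 2 -> Num.sqrt x <= y.
Proof. by move=> y0 hx; rewrite -[y]ger0_norm // -sqrtr_sqr; apply: ler_wsqrtr. Qed.

Definition Ak (a : 'I_n -> R) k := a_k u lam1 a k.
Definition B2k (b2 : 'I_n -> R) k := b2_k u lam2 b2 k.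
Definition B3k (b3 : 'I_n -> R) k := b3_k u lam3 b3 k.

Lemma inK_k a b2 b3 : inK u lam1 lam2 lam3 a b2 b3 -> forall k,
  0 <= Ak a k /\ B2k b2 k ^+ 2 + B3k b3 k ^+ 2 <= Ak a k ^+ 2.
Proof.
move=> h k; have := h k; rewrite /abs_b_k -/(B2k b2 k) -/(B3k b3 k) -/(Ak a k) => hk.
have A0 : 0 <= Ak a k by apply: le_trans hk; apply: sqrtr_ge0.
split => //.
have := sqr_sqrtr (addr_ge0 (sqr_ge0 (B2k b2 k)) (sqr_ge0 (B3k b3 k))).
move=> <-; rewrite ler_sqr // ?nnegrE // sqrtr_ge0.
Qed.

Definition Sec (e : 'I_d -> bool) a b2 b3 : 'M[R]_(4, d) :=
  mkpt (fun k => sz0 (e k) (Ak a k) (B2k b2 k) (B3k b3 k))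
       (fun k => sz1 (e k) (Ak a k) (B2k b2 k) (B3k b3 k))
       (fun k => sw0 (e k) (Ak a k) (B2k b2 k) (B3k b3 k))
       (fun k => sw1 (e k) (Ak a k) (B2k b2 k) (B3k b3 k)).

Lemma Sec_data e a b2 b3 : inK u lam1 lam2 lam3 a b2 b3 -> forall k,
  [/\ coeff_I lam1 (Sec e a b2 b3) k = Ak a k + lam1 k,
      coeff_S lam2 (Sec e a b2 b3) k = B2k b2 k + lam2 k,
      coeff_T lam3 (Sec e a b2 b3) k = B3k b3 k + lam3 k &
      zz (Sec e a b2 b3) k = if e k then Ak a k + sdisc (Ak a k) (B2k b2 k) (B3k b3 k)
                             else Ak a k - sdisc (Ak a k) (B2k b2 k) (B3k b3 k)].
Proof.
move=> hK k; have [A0 BA] := inK_k hK k.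
have [h1 h2 h3 h4] := sec1 (e k) A0 BA.
rewrite /coeff_I /coeff_S /coeff_T /zz /Sec; have [-> -> -> ->] := mkptE
  (fun k => sz0 (e k) (Ak a k) (B2k b2 k) (B3k b3 k))
  (fun k => sz1 (e k) (Ak a k) (B2k b2 k) (B3k b3 k))
  (fun k => sw0 (e k) (Ak a k) (B2k b2 k) (B3k b3 k))
  (fun k => sw1 (e k) (Ak a k) (B2k b2 k) (B3k b3 k)) k.
split => //; [| by rewrite h2 | by rewrite h3].
by rewrite h1 mulrA mulVf ?mul1r // pnatr_eq0.
Qed.

Lemma Sec_mu e a b2 b3 : inK u lam1 lam2 lam3 a b2 b3 ->
  mu_zero u lam1 lam2 lam3 (Sec e a b2 b3).
Proof.
move=> hK; apply/mu_zeroP; split.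
- exists a => k; have [-> _ _ _] := Sec_data e hK k.
  by rewrite /Ak /a_k subrK.
- exists b2 => k; have [_ -> _ _] := Sec_data e hK k.
  by rewrite /B2k /b2_k subrK.
- exists b3 => k; have [_ _ -> _] := Sec_data e hK k.
  by rewrite /B3k /b3_k subrK.
Qed.

Lemma phi_ex p : mu_zero u lam1 lam2 lam3 p -> exists a b2 b3,
  inK u lam1 lam2 lam3 a b2 b3 /\ forall k,
  [/\ coeff_I lam1 p k = Ak a k + lam1 k, coeff_S lam2 p k = B2k b2 k + lam2 k,
      coeff_T lam3 p k = B3k b3 k + lam3 k,
      Ak a k = 2^-1 * (zz p k + ww p k) &
      B2k b2 k ^+ 2 + B3k b3 k ^+ 2 = zz p k * ww p k].
Proof.
move=> /mu_zeroP [[a ha] [b2 hb2] [b3 hb3]]; exists a, b2, b3.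
have E : forall k, [/\ coeff_I lam1 p k = Ak a k + lam1 k, coeff_S lam2 p k = B2k b2 k + lam2 k,
      coeff_T lam3 p k = B3k b3 k + lam3 k,
      Ak a k = 2^-1 * (zz p k + ww p k) &
      B2k b2 k ^+ 2 + B3k b3 k ^+ 2 = zz p k * ww p k].
  move=> k.
  have eI : coeff_I lam1 p k = Ak a k + lam1 k by rewrite ha /Ak /a_k subrK.
  have eS : coeff_S lam2 p k = B2k b2 k + lam2 k by rewrite hb2 /B2k /b2_k subrK.
  have eT : coeff_T lam3 p k = B3k b3 k + lam3 k by rewrite hb3 /B3k /b3_k subrK.
  split => //.
  - move: eI; rewrite /coeff_I /zz /ww => /addIr <-; by rewrite !addrA.
  - move: eS eT; rewrite /coeff_S /coeff_T /zz /ww => /addIr <- /addIr <-; ring.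
split => // k; have [_ _ _ eA eB] := E k.
rewrite /abs_b_k -/(B2k b2 k) -/(B3k b3 k) -/(Ak a k) eB eA.
apply: sqrt_le.
  by apply: mulr_ge0; [rewrite invr_ge0 ler0n| apply: addr_ge0; apply: addr_ge0; apply: sqr_ge0].
have : 0 <= (zz p k - ww p k) ^+ 2 by apply: sqr_ge0.
move=> h; set x := zz p k; set y := ww p k in h *.
rewrite -subr_ge0; have -> : (2^-1 * (x + y)) ^+ 2 - x * y = 4^-1 * (x - y) ^+ 2 by field.
by apply: mulr_ge0 => //; rewrite invr_ge0 ler0n.
Qed.


Lemma Sec_same e e' a b2 b3 : inK u lam1 lam2 lam3 a b2 b3 ->
  (forall k, e k = e' k \/ sdisc (Ak a k) (B2k b2 k) (B3k b3 k) = 0) ->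
  exists th, Sec e' a b2 b3 = act th (Sec e a b2 b3).
Proof.
move=> hK he; apply: hopf => k.
have [h1 h2 h3 h4] := Sec_data e hK k.
have [h1' h2' h3' h4'] := Sec_data e' hK k.
split; [by rewrite h1 h1'|by rewrite h2 h2'|by rewrite h3 h3'|].
rewrite h4 h4'; case: (he k) => [->//|->].
by case: (e k); case: (e' k); rewrite ?addr0 ?subr0.
Qed.

Lemma sdisc0 a b2 b3 k : Ak a k = abs_b_k u lam2 lam3 b2 b3 k ->
  sdisc (Ak a k) (B2k b2 k) (B3k b3 k) = 0.
Proof.
rewrite /abs_b_k /sdisc -/(B2k b2 k) -/(B3k b3 k) => ->.
by rewrite sqr_sqrtr ?subrr ?sqrtr0 // addr_ge0 // sqr_ge0.
Qed.

Lemma cover p : mu_zero u lam1 lam2 lam3 p -> exists a b2 b3 e,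
  inK u lam1 lam2 lam3 a b2 b3 /\ exists th, p = act th (Sec e a b2 b3).
Proof.
move=> hp; have [a [b2 [b3 [hK E]]]] := phi_ex hp.
exists a, b2, b3, (fun k => ww p k <= zz p k); split => //.
apply: hopf => k.
have [h1 h2 h3 h4] := Sec_data (fun k => ww p k <= zz p k) hK k.
have [e1 e2 e3 e4 e5] := E k.
split; [by rewrite h1 e1|by rewrite h2 e2|by rewrite h3 e3|].
rewrite h4 /sdisc e5 e4 /=.
set x := zz p k; set y := ww p k.
have -> : (2^-1 * (x + y)) ^+ 2 - x * y = (2^-1 * (x - y)) ^+ 2 by field.
rewrite sqrtr_sqr; have [hxy|hxy] := leP y x.
  rewrite ger0_norm; last by apply: mulr_ge0; [rewrite invr_ge0 ler0n|rewrite subr_ge0].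
  by field.
rewrite ler0_norm; last by apply: mulr_ge0_le0; [rewrite invr_ge0 ler0n| rewrite subr_le0 ltW].
by field.
Qed.


Lemma mx_cont (T : topologicalType) m m' (f : T -> 'M[R]_(m, m')) :
  (forall i j, continuous (fun x => f x i j)) -> continuous f.
Proof.
move=> hf x A [P hP sPA].
apply: (filterS (fun y (hy : forall ij : 'I_m * 'I_m', P ij.1 ij.2 (f y ij.1 ij.2)) => sPA _ (fun i j => hy (i, j)))).
apply: filter_forall => -[i j] /=.
exact: (hf i j x _ (hP i j)).
Qed.

Lemma entry_cont m m' (i : 'I_m) (j : 'I_m') : continuous (fun M : 'M[R]_(m, m') => M i j).
Proof.
move=> M A hA; exists (fun i' j' => if (i' == i) && (j' == j) then A else setT).
  by move=> i' j'; case: ifP => [/andP[/eqP -> /eqP ->]//|_]; apply: filterT.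
by move=> N /(_ i j); rewrite !eqxx.
Qed.


Local Open Scope quotient_scope.
Local Notation MM := (M u lam1 lam2 lam3).
Local Notation muz := (mu_zero u lam1 lam2 lam3).

Definition cls (p : 'M[R]_(4, d)) (hp : muz p) : MM :=
  \pi_MM (@exist _ _ p (mem_set hp) : set_type muz).

Lemma cls_irr p (h1 h2 : muz p) : cls h1 = cls h2.
Proof. by rewrite /cls; congr (\pi_MM _); apply/val_inj. Qed.

Lemma cls_eq p q (hp : muz p) (hq : muz q) : p = q -> cls hp = cls hq.
Proof. by move=> e; subst q; apply: cls_irr. Qed.

Lemma connectedRT : connected [set: R].
Proof. by apply/connected_intervalP => x y _ _ z _. Qed.

Definition conn (x y : MM) := connected_component [set: MM] x y.

Lemma conn_trans y x z : conn x y -> conn y z -> conn x z.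
Proof. exact: connected_component_trans. Qed.
Lemma conn_sym x y : conn x y -> conn y x.
Proof. exact: connected_component_sym. Qed.

Lemma path_conn (P : R -> 'M[R]_(4, d)) (hP : forall t, muz (P t)) :
  (forall i j, continuous (fun t => P t i j)) -> forall t, conn (cls (hP 0)) (cls (hP t)).
Proof.
move=> hc t.
pose g t := cls (hP t).
pose f t := (@exist _ _ (P t) (mem_set (hP t)) : set_type muz).
have fc : continuous f.
  apply: (@continuous_comp_initial _ _ _ (@set_val _ muz)).
  by apply: mx_cont.
have gc : continuous g.
  move=> x; apply: (continuous_comp (fc x)); exact: pi_continuous.
have : connected (g @` setT).
  apply: connected_continuous_connected; first exact: connectedRT.
  by apply: continuous_subspaceT.
move=> hcon; apply: (@connected_component_max _ _ (g @` setT)) => //;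
  by [exists 0 | exists t].
Qed.


Section ContHelp.
Variable T : topologicalType.
Implicit Types f g : T -> R.
Lemma cD f g : continuous f -> continuous g -> continuous (fun x => f x + g x).
Proof. by move=> hf hg x; apply: cvgD; [exact: hf | exact: hg]. Qed.
Lemma cB f g : continuous f -> continuous g -> continuous (fun x => f x - g x).
Proof. by move=> hf hg x; apply: cvgB; [exact: hf | exact: hg]. Qed.
Lemma cM f g : continuous f -> continuous g -> continuous (fun x => f x * g x).
Proof. by move=> hf hg x; apply: cvgM; [exact: hf | exact: hg]. Qed.
Lemma cN f : continuous f -> continuous (fun x => - f x).
Proof. by move=> hf x; apply: cvgN; exact: hf. Qed.
Lemma cC (c : R) : continuous (fun _ : T => c).
Proof. exact: cst_continuous. Qed.
Lemma cX f m : continuous f -> continuous (fun x => f x ^+ m).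
Proof.
move=> hf; elim: m => [|m ih]; first exact: cC.
have -> : (fun x => f x ^+ m.+1) = (fun x => f x * f x ^+ m) by apply: funext => x; rewrite exprS.
exact: cM.
Qed.
Lemma ccos f : continuous f -> continuous (fun x => cos (f x)).
Proof. by move=> hf x; apply: (continuous_comp (hf x)); apply: continuous_cos. Qed.
Lemma csin f : continuous f -> continuous (fun x => sin (f x)).
Proof. by move=> hf x; apply: (continuous_comp (hf x)); apply: continuous_sin. Qed.
Lemma csqrt f : continuous f -> continuous (fun x => Num.sqrt (f x)).
Proof. by move=> hf x; apply: (continuous_comp (hf x)); apply: sqrt_continuous. Qed.
Lemma cSum m (F : T -> 'I_m -> R) : (forall j, continuous (fun x => F x j)) ->
  continuous (fun x => \sum_(j < m) F x j).
Proof.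
elim: m F => [|m ih] F hF.
  have -> : (fun x => \sum_(j < 0) F x j) = (fun _ => 0) by apply: funext => x; rewrite big_ord0.
  exact: cC.
have -> : (fun x => \sum_(j < m.+1) F x j) =
  (fun x => \sum_(j < m) F x (widen_ord (leqnSn m) j) + F x ord_max).
  by apply: funext => x; rewrite big_ord_recr.
by apply: cD; [apply: (ih (fun x j => F x (widen_ord (leqnSn m) j))) => j; apply: hF | apply: hF].
Qed.
End ContHelp.


Lemma cid (T : topologicalType) : continuous (fun x : T => x).
Proof. by move=> x; apply: cvg_id. Qed.

Ltac cont := repeat first [ apply: cC | apply: cid | apply: cD | apply: cB | apply: cM | apply: cN
  | apply: ccos | apply: csin | apply: csqrt | apply: cX ].

Lemma mkpt_cont (f0 f1 f2 f3 : R -> 'I_d -> R) :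
  (forall k, continuous (fun t => f0 t k)) -> (forall k, continuous (fun t => f1 t k)) ->
  (forall k, continuous (fun t => f2 t k)) -> (forall k, continuous (fun t => f3 t k)) ->
  forall i j, continuous (fun t => mkpt (f0 t) (f1 t) (f2 t) (f3 t) i j).
Proof.
move=> h0 h1 h2 h3 i j.
have -> : (fun t => mkpt (f0 t) (f1 t) (f2 t) (f3 t) i j) = (fun t =>
  if i == inord 0 :> 'I_4 then f0 t j else if i == inord 1 :> 'I_4 then f1 t j
  else if i == inord 2 :> 'I_4 then f2 t j else f3 t j).
  by apply: funext => t; rewrite mxE.
by case: (i4_cases i) => ->; rewrite ?eqxx ?i4_ne // ?eqxx.
Qed.

Lemma act_mkpt th (p : 'M[R]_(4, d)) : act th p =
  mkpt (fun k => cos (th k) * zre p k - sin (th k) * zim p k)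
       (fun k => sin (th k) * zre p k + cos (th k) * zim p k)
       (fun k => cos (th k) * wre p k - sin (th k) * wim p k)
       (fun k => sin (th k) * wre p k + cos (th k) * wim p k).
Proof. by []. Qed.

Lemma rot_conn p (hp : muz p) th : conn (cls hp) (cls (act_mu th hp)).
Proof.
pose P t := act (fun k => t * th k) p.
have hP : forall t, muz (P t) by move=> t; apply: act_mu.
have := @path_conn P hP _ 1.
have e0 : P 0 = p.
  rewrite /P (_ : (fun k => 0 * th k) = fun=> 0) ?act0 //.
  by apply: funext => k; rewrite mul0r.
have e1 : P 1 = act th p.
  by rewrite /P (_ : (fun k => 1 * th k) = th) //; apply: funext => k; rewrite mul1r.
rewrite (cls_eq (hP 0) hp e0) (cls_eq (hP 1) (act_mu th hp) e1); apply.
move=> i j; rewrite /P; under eq_fun do rewrite act_mkpt.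
by apply: mkpt_cont => k; cont.
Qed.


Lemma sq_cont (T : topologicalType) (A B2 B3 : T -> R) :
  continuous A -> continuous B2 -> continuous B3 ->
  continuous (fun t => sq (A t) (B2 t) (B3 t)).
Proof. by move=> hA h2 h3; rewrite /sq /sdisc; cont. Qed.

Lemma div_sq_cont (T : topologicalType) (A B2 B3 B : T -> R) :
  continuous A -> continuous B2 -> continuous B3 -> continuous B ->
  (forall t, 0 <= A t /\ B2 t ^+ 2 + B3 t ^+ 2 <= A t ^+ 2) ->
  (forall t, B t ^+ 2 <= B2 t ^+ 2 + B3 t ^+ 2) ->
  continuous (fun t => B t / sq (A t) (B2 t) (B3 t)).
Proof.
move=> hA h2 h3 hB hK hBB x.
have hW := sq_cont hA h2 h3.
pose s t := sdisc (A t) (B2 t) (B3 t).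
have s0 : forall t, 0 <= s t by move=> t; apply: sqrtr_ge0.
have ss : forall t, s t ^+ 2 = A t ^+ 2 - (B2 t ^+ 2 + B3 t ^+ 2).
  by move=> t; rewrite sqr_sqrtr // subr_ge0; case: (hK t).
have bound : forall t, (B t / sq (A t) (B2 t) (B3 t)) ^+ 2 <= A t.
  move=> t; have [A0 BA] := hK t.
  rewrite /sq -/(s t).
  have [q0|q0] := eqVneq (A t + s t) 0.
    by rewrite q0 sqrtr0 invr0 mulr0 expr0n.
  have qp : 0 < A t + s t by rewrite lt_def q0 /= addr_ge0.
  rewrite expr_div_n (sqr_sqrtr (ltW qp)) ler_pdivrMr //.
  have := ss t; have := hBB t; have := s0 t; nra.
have [Wx|Wx] := eqVneq (sq (A x) (B2 x) (B3 x)) 0; last first.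
  have hV := @continuousV _ _ (fun t => sq (A t) (B2 t) (B3 t)) x Wx (hW x).
  by apply: cvgM; [exact: hB | exact: hV].
have q0 : A x + s x = 0.
  move/eqP: Wx; rewrite /sq -/(s x) sqrtr_eq0 => hq.
  by apply/eqP; rewrite eq_le hq addr_ge0 // ?s0; case: (hK x).
have Ax0 : A x = 0.
  by have := s0 x; case: (hK x) => A0 _; lra.
apply/cvgrPdist_lt => e e0 /=.
rewrite Wx invr0 mulr0.
have e20 : 0 < e ^+ 2 by rewrite exprn_gt0.
have := hA x; move/cvgrPdist_lt => /(_ _ e20); apply: filterS => t ht.
have hb := bound t.
move: ht; rewrite Ax0 sub0r normrN => ht.
have := ler_norm (A t) => hn.
rewrite sub0r normrN ltr_norml; apply/andP; split; nra.
Qed.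


Lemma lin_sum (x y w : 'I_n -> R) (l c : R) :
  \sum_(j < n) (x j + c * (y j - x j)) * w j - l =
  (\sum_(j < n) x j * w j - l) + c * ((\sum_(j < n) y j * w j - l) - (\sum_(j < n) x j * w j - l)).
Proof.
rewrite (eq_bigr (fun j => x j * w j + c * (y j * w j - x j * w j))); last first.
  by move=> j _; ring.
rewrite big_split /= -mulr_sumr sumrB; ring.
Qed.

Definition cc (t : R) : R := (1 - cos t) / 2.
Definition mix (x y : 'I_n -> R) t := fun j => x j + cc t * (y j - x j).

Lemma cc_cont : continuous cc.
Proof. by rewrite /cc; cont. Qed.

Lemma cc_range t : 0 <= cc t <= 1.
Proof.
rewrite /cc; have := cos_geN1 t; have := cos_le1 t => h1 h2.
apply/andP; split.
  by apply: divr_ge0; lra.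
by rewrite ler_pdivrMr //; lra.
Qed.

Lemma cc0 : cc 0 = 0.
Proof. by rewrite /cc cos0 subrr mul0r. Qed.
Lemma ccpi : cc pi = 1.
Proof. by rewrite /cc cospi opprK divff // pnatr_eq0. Qed.

Lemma mix0 x y : mix x y 0 = x.
Proof. by apply: funext => j; rewrite /mix cc0 mul0r addr0. Qed.
Lemma mixpi x y : mix x y pi = y.
Proof. by apply: funext => j; rewrite /mix ccpi mul1r addrC subrK. Qed.

Lemma Ak_mix a0 a1 t k : Ak (mix a0 a1 t) k = Ak a0 k + cc t * (Ak a1 k - Ak a0 k).
Proof. exact: lin_sum. Qed.
Lemma B2k_mix a0 a1 t k : B2k (mix a0 a1 t) k = B2k a0 k + cc t * (B2k a1 k - B2k a0 k).
Proof. exact: lin_sum. Qed.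
Lemma B3k_mix a0 a1 t k : B3k (mix a0 a1 t) k = B3k a0 k + cc t * (B3k a1 k - B3k a0 k).
Proof. exact: lin_sum. Qed.

Lemma convex1 (A0 A1 x0 y0 x1 y1 l : R) : 0 <= l <= 1 ->
  Num.sqrt (x0 ^+ 2 + y0 ^+ 2) <= A0 -> Num.sqrt (x1 ^+ 2 + y1 ^+ 2) <= A1 ->
  Num.sqrt ((x0 + l * (x1 - x0)) ^+ 2 + (y0 + l * (y1 - y0)) ^+ 2) <= A0 + l * (A1 - A0).
Proof.
move=> /andP [l0 l1] h0 h1.
set r0 := Num.sqrt (x0 ^+ 2 + y0 ^+ 2) in h0.
set r1 := Num.sqrt (x1 ^+ 2 + y1 ^+ 2) in h1.
have r00 : 0 <= r0 by apply: sqrtr_ge0.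
have r10 : 0 <= r1 by apply: sqrtr_ge0.
have e0 : r0 ^+ 2 = x0 ^+ 2 + y0 ^+ 2 by rewrite sqr_sqrtr // addr_ge0 // sqr_ge0.
have e1 : r1 ^+ 2 = x1 ^+ 2 + y1 ^+ 2 by rewrite sqr_sqrtr // addr_ge0 // sqr_ge0.
have cs : x0 * x1 + y0 * y1 <= r0 * r1.
  have hsq : (x0 * x1 + y0 * y1) ^+ 2 <= (r0 * r1) ^+ 2.
    rewrite exprMn e0 e1; have := sqr_ge0 (x0 * y1 - y0 * x1); nra.
  have : 0 <= r0 * r1 by apply: mulr_ge0.
  nra.
have m0 : 0 <= (1 - l) * r0 + l * r1 by apply: addr_ge0; apply: mulr_ge0 => //; lra.
apply: sqrt_le; first by nra.
have step : (x0 + l * (x1 - x0)) ^+ 2 + (y0 + l * (y1 - y0)) ^+ 2 <= ((1 - l) * r0 + l * r1) ^+ 2.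
  have : 0 <= l * (1 - l) by apply: mulr_ge0; lra.
  nra.
apply: le_trans step _.
rewrite ler_sqr ?nnegrE //; first by nra.
nra.
Qed.

Lemma inK_mix a0 b20 b30 a1 b21 b31 t :
  inK u lam1 lam2 lam3 a0 b20 b30 -> inK u lam1 lam2 lam3 a1 b21 b31 ->
  inK u lam1 lam2 lam3 (mix a0 a1 t) (mix b20 b21 t) (mix b30 b31 t).
Proof.
move=> h0 h1 k; rewrite /abs_b_k -/(Ak _ k) -/(B2k _ k) -/(B3k _ k).
rewrite Ak_mix B2k_mix B3k_mix; apply: convex1; first exact: cc_range.
- exact: h0 k.
- exact: h1 k.
Qed.


Lemma seg_conn e a0 b20 b30 a1 b21 b31
  (h0 : inK u lam1 lam2 lam3 a0 b20 b30) (h1 : inK u lam1 lam2 lam3 a1 b21 b31) :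
  conn (cls (Sec_mu e h0)) (cls (Sec_mu e h1)).
Proof.
pose P t := Sec e (mix a0 a1 t) (mix b20 b21 t) (mix b30 b31 t).
have hK : forall t, inK u lam1 lam2 lam3 (mix a0 a1 t) (mix b20 b21 t) (mix b30 b31 t).
  by move=> t; apply: inK_mix.
have hP : forall t, muz (P t) by move=> t; apply: Sec_mu.
have := @path_conn P hP _ pi.
have e0 : P 0 = Sec e a0 b20 b30 by rewrite /P !mix0.
have e1 : P pi = Sec e a1 b21 b31 by rewrite /P !mixpi.
rewrite (cls_eq (hP 0) (Sec_mu e h0) e0) (cls_eq (hP pi) (Sec_mu e h1) e1); apply.
pose A k t := Ak (mix a0 a1 t) k.
pose C2 k t := B2k (mix b20 b21 t) k.
pose C3 k t := B3k (mix b30 b31 t) k.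
have cA : forall k, continuous (A k).
  move=> k; rewrite /A; under eq_fun do rewrite Ak_mix.
  by apply: cD; [apply: cC | apply: cM; [apply: cc_cont | apply: cC]].
have c2 : forall k, continuous (C2 k).
  move=> k; rewrite /C2; under eq_fun do rewrite B2k_mix.
  by apply: cD; [apply: cC | apply: cM; [apply: cc_cont | apply: cC]].
have c3 : forall k, continuous (C3 k).
  move=> k; rewrite /C3; under eq_fun do rewrite B3k_mix.
  by apply: cD; [apply: cC | apply: cM; [apply: cc_cont | apply: cC]].
have hb : forall k t, 0 <= A k t /\ C2 k t ^+ 2 + C3 k t ^+ 2 <= A k t ^+ 2.
  by move=> k t; apply: inK_k.
have d2 : forall k, continuous (fun t => C2 k t / sq (A k t) (C2 k t) (C3 k t)).
  move=> k; apply: div_sq_cont => // t; have := sqr_ge0 (C3 k t); lra.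
have d3 : forall k, continuous (fun t => C3 k t / sq (A k t) (C2 k t) (C3 k t)).
  move=> k; apply: div_sq_cont => // t; have := sqr_ge0 (C2 k t); lra.
have s0 : forall k, continuous (fun t => sq (A k t) (C2 k t) (C3 k t)).
  by move=> k; apply: sq_cont.
rewrite /P /Sec; apply: mkpt_cont => k; rewrite /sz0 /sz1 /sw0 /sw1; case: (e k).
all: first [exact: cC | exact: (s0 k) | exact: (d2 k) | exact: (d3 k) | apply: cN; exact: (d2 k)].
Qed.


Lemma act_zzww (th : 'I_d -> R) (p : 'M[R]_(4, d)) k :
  zz (act th p) k = zz p k /\ ww (act th p) k = ww p k.
Proof.
rewrite /zz /ww; have [-> -> -> ->] := actE th p k.
have h := cos2Dsin2 (th k); set c := cos _ in h *; set s := sin _ in h *.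
by split; rewrite -[RHS]mul1r -h; ring.
Qed.

Lemma inN0 : inN u (fun _ : 'I_d => 0 : R).
Proof.
exists (fun=> 0) => j; rewrite big1 ?mulr0 // => k _; by rewrite mul0r.
Qed.

Lemma repr_pi (q : set_type muz) : exists th, val (repr (\pi_MM q)) = act th (val q).
Proof.
set r := repr (\pi_MM q).
have : r = q %[mod Mq u lam1 lam2 lam3] by exact: (reprK (\pi_MM q)).
move/eqquotP => /asboolP horb.
have : Defs.orbit r r by exists (fun=> 0); split; [exact: inN0 | rewrite act0].
rewrite horb => -[th [_ e]]; by exists th.
Qed.


Lemma coeffI_sum (q : 'M[R]_(4, d)) k : coeff_I lam1 q k = 2^-1 * (zz q k + ww q k) + lam1 k.
Proof. by rewrite /coeff_I /zz /ww !addrA. Qed.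

Lemma Sec_f e a b2 b3 (hK : inK u lam1 lam2 lam3 a b2 b3) k :
  zz (Sec e a b2 b3) k - ww (Sec e a b2 b3) k =
  if e k then 2 * sdisc (Ak a k) (B2k b2 k) (B3k b3 k)
  else - (2 * sdisc (Ak a k) (B2k b2 k) (B3k b3 k)).
Proof.
have [h1 _ _ h4] := Sec_data e hK k.
move: h1; rewrite coeffI_sum => /addIr h1.
have hw : ww (Sec e a b2 b3) k = 2 * Ak a k - zz (Sec e a b2 b3) k.
  by rewrite -h1 mulrA divff ?pnatr_eq0 // mul1r; ring.
rewrite hw h4; case: (e k); ring.
Qed.

Lemma necessary : [set: MM] !=set0 -> connected [set: MM] -> forall k,
  exists a b2 b3, inK u lam1 lam2 lam3 a b2 b3 /\ a_k u lam1 a k = abs_b_k u lam2 lam3 b2 b3 k.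
Proof.
move=> [x0 _] hc k; apply: contrapT => H.
have hne : forall p, muz p -> zz p k != ww p k.
  move=> p hp; apply/negP => /eqP e.
  have [a [b2 [b3 [hK E]]]] := phi_ex hp.
  apply: H; exists a, b2, b3; split => //.
  have [_ _ _ eA eB] := E k.
  rewrite /abs_b_k -/(B2k b2 k) -/(B3k b3 k) -/(Ak a k) eA eB e -expr2 sqrtr_sqr.
  rewrite ger0_norm; first by field.
  by rewrite /ww addr_ge0 // sqr_ge0.
have hp0 : muz (val (repr x0)) by apply: set_mem; apply: valP.
have [a [b2 [b3 [hK _]]]] := phi_ex hp0.
set s := sdisc (Ak a k) (B2k b2 k) (B3k b3 k).
have sp : 0 < s.
  rewrite lt_def sqrtr_ge0 andbT; apply/negP => /eqP s0.
  apply: H; exists a, b2, b3; split => //.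
  have [A0 BA] := inK_k hK k.
  move: s0; rewrite /s /sdisc => /eqP; rewrite sqrtr_eq0 => hle.
  rewrite /abs_b_k -/(B2k b2 k) -/(B3k b3 k) -/(Ak a k).
  have -> : B2k b2 k ^+ 2 + B3k b3 k ^+ 2 = Ak a k ^+ 2 by apply/eqP; rewrite eq_le BA /=; lra.
  by rewrite sqrtr_sqr ger0_norm.
pose fval (q : 'M[R]_(4, d)) := zz q k - ww q k.
pose F (x : MM) := fval (val (repr x)).
have Finv : forall q : set_type muz, F (\pi_MM q) = fval (val q).
  move=> q; have [th e] := repr_pi q; rewrite /F e /fval.
  by have [-> ->] := act_zzww th (val q) k.
have fc0 : continuous fval.
  by rewrite /fval /zz /ww /zre /zim /wre /wim; cont; apply: entry_cont.
have fc : continuous (fun q : set_type muz => fval (val q)).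
  move=> q; apply: (@continuous_comp _ _ _ set_val fval); first exact: initial_continuous.
  exact: fc0.
have Fne : forall x, F x != 0.
  move=> x; have hx : muz (val (repr x)) by apply: set_mem; apply: valP.
  by rewrite /F /fval subr_eq0; apply: hne.
pose Up := [set x : MM | 0 < F x]; pose Un := [set x : MM | F x < 0].
have openF : forall (O : set R), open O -> open [set x : MM | O (F x)].
  move=> O oO; rewrite /open /= /quotient_open.
  have -> : \pi_MM @^-1` [set x : MM | O (F x)] = (fun q : set_type muz => fval (val q)) @^-1` O.
    by apply/predeqP => q /=; rewrite Finv.
  by move/continuousP: fc; apply.
have oUp : open Up by apply: (openF [set y | 0 < y]); apply: open_gt.
have oUn : open Un by apply: (openF [set y | y < 0]); apply: open_lt.
have hT := Sec_mu (fun=> true) hK.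
have hF := Sec_mu (fun=> false) hK.
have FT : F (cls hT) = 2 * s by rewrite /cls Finv /= /fval Sec_f.
have FF : F (cls hF) = - (2 * s) by rewrite /cls Finv /= /fval Sec_f.
have : Up (cls hF).
  rewrite (hc Up); first by [].
  - by exists (cls hT); rewrite /Up /= FT; lra.
  - by exists Up => //; rewrite setTI.
  - exists (~` Un); first exact: open_closedC.
    rewrite setTI; apply/predeqP => x; rewrite /Up /Un /=; have := Fne x.
    by case: ltgtP.
by rewrite /Up /= FF; lra.
Qed.


Lemma cls_repr (x : MM) (hx : muz (val (repr x))) : cls hx = x.
Proof.
rewrite /cls -[RHS]reprK; congr (\pi_MM _); by apply/val_inj.
Qed.

Lemma sufficient : [set: MM] !=set0 ->
  (forall k, exists a b2 b3, inK u lam1 lam2 lam3 a b2 b3 /\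
      a_k u lam1 a k = abs_b_k u lam2 lam3 b2 b3 k) ->
  connected [set: MM].
Proof.
move=> [x0 _] hyp.
have hp0 : muz (val (repr x0)) by apply: set_mem; apply: valP.
have [a0 [b20 [b30 [h0 _]]]] := phi_ex hp0.
pose base := cls (Sec_mu (fun=> true) h0).
have flip : forall m e, #|[pred k | ~~ e k]| = m -> conn (cls (Sec_mu e h0)) base.
  elim=> [|m ih] e hm.
    have ee : e = fun=> true.
      apply: funext => k; apply/negPn/negP => hk.
      by have := card0_eq hm k; rewrite !inE hk.
    subst e; apply: connected_component_refl; done.
  have [k hk] : exists k, ~~ e k.
    have : (0 < #|[pred k | ~~ e k]|)%N by rewrite hm.
    by case/card_gt0P => k; rewrite inE; exists k.
  pose e' := fun j => (j == k) || e j.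
  have hm' : #|[pred j | ~~ e' j]| = m.
    move: hm; rewrite (cardD1 k) inE hk add1n => -[<-].
    by apply: eq_card => j; rewrite !inE /e' negb_or.
  have [a [b2 [b3 [hK heq]]]] := hyp k.
  apply: conn_trans (ih e' hm').
  apply: (@conn_trans (cls (Sec_mu e hK))); first exact: seg_conn.
  apply: (@conn_trans (cls (Sec_mu e' hK))); last exact/conn_sym/seg_conn.
  have hsame : forall j, e j = e' j \/ sdisc (Ak a j) (B2k b2 j) (B3k b3 j) = 0.
    move=> j; rewrite /e'; case: eqP => [->|_]; last by left.
    by right; apply: sdisc0.
  have [th eth] := Sec_same hK hsame.
  rewrite (cls_eq (Sec_mu e' hK) (act_mu th (Sec_mu e hK)) eth).
  exact: rot_conn.
have all_base : forall x : MM, conn base x.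
  move=> x.
  have hx : muz (val (repr x)) by apply: set_mem; apply: valP.
  rewrite -(cls_repr hx).
  have [a [b2 [b3 [e [hK [th eth]]]]]] := cover hx.
  rewrite (cls_eq hx (act_mu th (Sec_mu e hK)) eth).
  apply: (@conn_trans (cls (Sec_mu e hK))); last exact: rot_conn.
  apply: conn_sym; apply: (@conn_trans (cls (Sec_mu e h0))); first exact: seg_conn.
  exact: (flip _ e erefl).
have -> : [set: MM] = connected_component [set: MM] base.
  by apply/predeqP => x; split => // _; apply: all_base.
exact: component_connected.
Qed.

End Work.

Unset Implicit Arguments.

Theorem corollary5p4 (R : realType) (d n : nat) (u : 'M[int]_(d, n))
  (lam1 lam2 lam3 : 'I_d -> R) :
  row_full (map_mx (fun x : int => x%:~R : R) u) ->
  [set: M u lam1 lam2 lam3] !=set0 ->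
  (connected [set: M u lam1 lam2 lam3] <->
   forall k : 'I_d, exists (a b2 b3 : 'I_n -> R),
     inK u lam1 lam2 lam3 a b2 b3 /\ a_k u lam1 a k = abs_b_k u lam2 lam3 b2 b3 k).
Proof.
move=> _ hne; split.
- by move=> hc; apply: necessary.
- by move=> h; apply: sufficient.
Qed.
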